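(* Let $U$ be a disjunctive uninorm with neutral element $e\in\,]0,1[$, let $x\in[0,1]$ with $x<e$ be such that $U(x,\cdot)$ is continuous with range $[0,1]$, and let $a_x=\lim_{n\to+\infty}x_U^{(n)}$, $d_x=\lim_{n\to+\infty}x_U^{(-n)}$. If $U(x,t)=t$ for all $t\in[0,a_x]\cup[d_x,1]$, then $U$ is an ordinal sum of semigroups defined on $]a_x,d_x[$ and on $[0,a_x]\cup[d_x,1]$; namely, both $]a_x,d_x[$ and $[0,a_x]\cup[d_x,1]$ are closed under $U$, and $U(s,t)=t$ for all $s\in\,]a_x,d_x[$ and $t\in[0,a_x]\cup[d_x,1]$.
   Context: A uninorm is a map $U:[0,1]^2\to[0,1]$ that is commutative, associative, non-decreasing in each variable, and has a neutral element $e\in[0,1]$; it is disjunctive if $U(1,0)=1$. Under the hypotheses there is a unique $y\in[0,1]$ with $U(x,y)=e$ (and $y>e$). Define $x_U^{(0)}=e$, $x_U^{(n)}=U(x,x_U^{(n-1)})$ for $n\in\mathbb{N}$, and $x_U^{(-n)}=y_U^{(n)}$ where $y_U^{(0)}=e$, $y_U^{(n)}=U(y,y_U^{(n-1)})$; the sequence $(x_U^{(n)})_{n\ge0}$ is non-increasing and $(x_U^{(-n)})_{n\ge0}$ is non-decreasing, so the limits exist. *)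

(* Defs.v *)
From Stdlib Require Import Reals.
From Coquelicot Require Import Coquelicot.
Open Scope R_scope.

Definition inI (t : R) : Prop := 0 <= t <= 1.

(* U : R -> R -> R is a uninorm on [0,1] with neutral element e
   (only its values on [0,1]^2 matter). *)
Definition is_uninorm (U : R -> R -> R) (e : R) : Prop :=
  inI e /\
  (forall s t, inI s -> inI t -> inI (U s t)) /\
  (forall s t, inI s -> inI t -> U s t = U t s) /\
  (forall s t u, inI s -> inI t -> inI u -> U s (U t u) = U (U s t) u) /\
  (forall s1 s2 t, inI s1 -> inI s2 -> inI t -> s1 <= s2 -> U s1 t <= U s2 t) /\
  (forall t, inI t -> U e t = t).

Definition disjunctive (U : R -> R -> R) : Prop := U 1 0 = 1.

Fixpoint upow (U : R -> R -> R) (e x : R) (n : nat) : R :=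
  match n with
  | O => e
  | S m => U x (upow U e x m)
  end.

Definition cont_on_I (f : R -> R) : Prop :=
  forall t, inI t -> filterlim f (within inI (locally t)) (locally (f t)).

(* Main.v *)
Require Import Defs.
From Stdlib Require Import Reals Lra Lia.
From Coquelicot Require Import Coquelicot.
Open Scope R_scope.

Lemma lim_le_ev (u : nat -> R) (l c : R) (k : nat) :
  (forall n, (k <= n)%nat -> u n <= c) -> Un_cv u l -> l <= c.
Proof.
  intros H Hc. destruct (Rle_lt_dec l c) as [h|h]; auto.
  destruct (Hc (l - c)) as [N HN]; [lra|].
  specialize (HN (max N k) (Nat.le_max_l _ _)).
  specialize (H (max N k) (Nat.le_max_r _ _)).
  unfold Rdist in HN. apply Rabs_lt_between in HN. lra.
Qed.

Lemma lim_ge_ev (u : nat -> R) (l c : R) (k : nat) :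
  (forall n, (k <= n)%nat -> c <= u n) -> Un_cv u l -> c <= l.
Proof.
  intros H Hc. destruct (Rle_lt_dec c l) as [h|h]; auto.
  destruct (Hc (c - l)) as [N HN]; [lra|].
  specialize (HN (max N k) (Nat.le_max_l _ _)).
  specialize (H (max N k) (Nat.le_max_r _ _)).
  unfold Rdist in HN. apply Rabs_lt_between in HN. lra.
Qed.

Lemma lim_below (u : nat -> R) (l s : R) : Un_cv u l -> l < s -> exists n, u n <= s.
Proof.
  intros Hc h. destruct (Hc (s - l)) as [N HN]; [lra|].
  exists N. specialize (HN N (le_n _)). unfold Rdist in HN.
  apply Rabs_lt_between in HN. lra.
Qed.

Lemma lim_above (u : nat -> R) (l s : R) : Un_cv u l -> s < l -> exists n, s <= u n.
Proof.
  intros Hc h. destruct (Hc (l - s)) as [N HN]; [lra|].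
  exists N. specialize (HN N (le_n _)). unfold Rdist in HN.
  apply Rabs_lt_between in HN. lra.
Qed.

Section H.
Lemma mon2 U e : is_uninorm U e -> forall t s1 s2, inI t -> inI s1 -> inI s2 -> s1 <= s2 ->
  U t s1 <= U t s2.
Proof.
  intros [He [Hcl [Hcom [Has [Hmon Hid]]]]] t s1 s2 ht h1 h2 h.
  rewrite (Hcom t s1), (Hcom t s2); auto.
Qed.

Lemma upow_I U e x : is_uninorm U e -> inI x -> forall n, inI (upow U e x n).
Proof.
  intros HU hx. destruct HU as [He [Hcl _]].
  induction n; simpl; auto.
Qed.

Lemma upow_dec U e x : is_uninorm U e -> inI x -> x <= e ->
  forall n, upow U e x (S n) <= upow U e x n.
Proof.
  intros HU hx hxe. pose proof (upow_I U e x HU hx) as HI.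
  pose proof HU as [He [Hcl [Hcom [Has [Hmon Hid]]]]].
  induction n.
  - simpl. rewrite Hcom, Hid; auto.
  - change (U x (upow U e x (S n)) <= U x (upow U e x n)).
    apply (mon2 U e HU); auto.
Qed.

Lemma upow_inc U e x : is_uninorm U e -> inI x -> e <= x ->
  forall n, upow U e x n <= upow U e x (S n).
Proof.
  intros HU hx hxe. pose proof (upow_I U e x HU hx) as HI.
  pose proof HU as [He [Hcl [Hcom [Has [Hmon Hid]]]]].
  induction n.
  - simpl. rewrite Hcom, Hid; auto.
  - change (U x (upow U e x n) <= U x (upow U e x (S n))).
    apply (mon2 U e HU); auto.
Qed.

Lemma mono_dec (u : nat -> R) : (forall n, u (S n) <= u n) ->
  forall k n, (k <= n)%nat -> u n <= u k.
Proof.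
  intros H k n hk. induction hk. lra. specialize (H m). lra.
Qed.

Lemma mono_inc (u : nat -> R) : (forall n, u n <= u (S n)) ->
  forall k n, (k <= n)%nat -> u k <= u n.
Proof.
  intros H k n hk. induction hk. lra. specialize (H m). lra.
Qed.

Lemma upow_inv U e x y : is_uninorm U e -> inI x -> inI y -> U x y = e ->
  forall n, U (upow U e x n) (upow U e y n) = e.
Proof.
  intros HU hx hy hxy.
  pose proof (upow_I U e x HU hx) as HIx. pose proof (upow_I U e y HU hy) as HIy.
  pose proof HU as [He [Hcl [Hcom [Has [Hmon Hid]]]]].
  induction n.
  - simpl. apply Hid; auto.
  - simpl. set (B := upow U e x n) in *. set (D := upow U e y n) in *.
    assert (inI B) by apply HIx. assert (inI D) by apply HIy.
    rewrite <- Has by auto. rewrite (Has B y D) by auto.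
    rewrite (Hcom B y) by auto. rewrite <- (Has y B D) by auto.
    rewrite IHn. rewrite (Has x y e) by auto. rewrite hxy. apply Hid; auto.
Qed.

Lemma upow_fix U e x t : is_uninorm U e -> inI x -> inI t -> U x t = t ->
  forall n, U (upow U e x n) t = t.
Proof.
  intros HU hx ht hf. pose proof (upow_I U e x HU hx) as HI.
  pose proof HU as [He [Hcl [Hcom [Has [Hmon Hid]]]]].
  induction n; simpl. apply Hid; auto.
  rewrite <- Has by auto. rewrite IHn. auto.
Qed.

Lemma y_fix U e x y t : is_uninorm U e -> inI x -> inI y -> inI t -> U x y = e ->
  U x t = t -> U y t = t.
Proof.
  intros HU hx hy ht hxy hf.
  pose proof HU as [He [Hcl [Hcom [Has [Hmon Hid]]]]].
  rewrite <- hf at 1. rewrite Has by auto. rewrite (Hcom y x) by auto.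
  rewrite hxy. rewrite Hid; auto.
Qed.
End H.

Theorem mainTheorem11 (U : R -> R -> R) (e x y a d : R) :
  is_uninorm U e -> disjunctive U ->
  0 < e < 1 ->
  inI x -> x < e ->
  cont_on_I (U x) ->
  (forall z, inI z -> exists t, inI t /\ U x t = z) ->
  inI y -> U x y = e ->
  is_lim_seq (upow U e x) a ->
  is_lim_seq (upow U e y) d ->
  (forall t, inI t -> (t <= a \/ d <= t) -> U x t = t) ->
  (forall s t, a < s < d -> a < t < d -> a < U s t < d) /\
  (forall s t, inI s -> (s <= a \/ d <= s) -> inI t -> (t <= a \/ d <= t) ->
      U s t <= a \/ d <= U s t) /\
  (forall s t, a < s < d -> inI t -> (t <= a \/ d <= t) -> U s t = t).
Proof.
  intros HU _ he hx hxe _ _ hy hxy Ha Hd Hfix.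
  apply is_lim_seq_Reals in Ha. apply is_lim_seq_Reals in Hd.
  pose proof HU as [He [Hcl [Hcom [Has [Hmon Hid]]]]].
  pose proof (upow_I U e x HU hx) as HIx. pose proof (upow_I U e y HU hy) as HIy.
  assert (hye : e < y).
  { destruct (Rlt_le_dec e y) as [h|h]; auto.
    assert (U x y <= U e y) by (apply Hmon; auto; unfold inI in *; lra).
    rewrite Hid in H by auto. destruct (Req_dec y e) as [q|q].
    - rewrite q in hxy. rewrite Hcom, Hid in hxy; auto; lra.
    - rewrite hxy in H. lra. }
  pose proof (upow_dec U e x HU hx (Rlt_le _ _ hxe)) as Hdec.
  pose proof (upow_inc U e y HU hy (Rlt_le _ _ hye)) as Hinc.
  assert (Hxa : forall k, a <= upow U e x k).
  { intro k. apply (lim_le_ev (upow U e x) _ _ k); auto. intros. apply mono_dec; auto. }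
  assert (Hyd : forall k, upow U e y k <= d).
  { intro k. apply (lim_ge_ev (upow U e y) _ _ k); auto. intros. apply mono_inc; auto. }
  assert (x1 : upow U e x 1 = x) by (simpl; rewrite Hcom, Hid; auto).
  assert (y1 : upow U e y 1 = y) by (simpl; rewrite Hcom, Hid; auto).
  assert (hax : a <= x) by (rewrite <- x1; auto).
  assert (hyd : y <= d) by (rewrite <- y1; auto).
  assert (ha0 : 0 <= a).
  { apply (lim_ge_ev (upow U e x) _ _ 0); auto. intros. apply HIx. }
  assert (hd1 : d <= 1).
  { apply (lim_le_ev (upow U e y) _ _ 0); auto. intros. apply HIy. }
  assert (Hinv := upow_inv U e x y HU hx hy hxy).
  assert (claim3 : forall s t, a < s < d -> inI t -> (t <= a \/ d <= t) -> U s t = t).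
  { intros s t hs ht hta.
    assert (hsI : inI s) by (unfold inI in *; lra).
    pose proof (Hfix t ht hta) as hf.
    destruct (lim_below _ _ _ Ha (proj1 hs)) as [n hn].
    destruct (lim_above _ _ _ Hd (proj2 hs)) as [m hm].
    assert (e1 := upow_fix U e x t HU hx ht hf n).
    assert (e2 := upow_fix U e y t HU hy ht (y_fix U e x y t HU hx hy ht hxy hf) m).
    assert (U (upow U e x n) t <= U s t) by (apply Hmon; auto).
    assert (U s t <= U (upow U e y m) t) by (apply Hmon; auto).
    lra. }
  split; [|split; [|exact claim3]].
  - intros s t hs ht.
    assert (hsI : inI s) by (unfold inI in *; lra).
    assert (htI : inI t) by (unfold inI in *; lra).
    set (w := U s t).
    assert (hw : inI w) by (apply Hcl; auto).
    destruct (Rle_lt_dec w a) as [h1|h1].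
    { exfalso.
      pose proof (Hfix w hw (or_introl h1)) as hf.
      pose proof (y_fix U e x y w HU hx hy hw hxy hf) as hfy.
      destruct (lim_below _ _ _ Ha (proj1 ht)) as [m hm].
      assert (ew := upow_fix U e y w HU hy hw hfy m).
      rewrite Hcom in ew by auto.
      assert (ge : e <= U t (upow U e y m)).
      { assert (Hk := Hinv m). assert (U (upow U e x m) (upow U e y m) <= U t (upow U e y m)) by (apply Hmon; auto). lra. }
      assert (U s e <= U s (U t (upow U e y m))).
      { apply (mon2 U e HU); auto. }
      rewrite (Hcom s e), Hid in H by auto.
      unfold w in *. rewrite <- Has in ew by auto. lra. }
    destruct (Rle_lt_dec d w) as [h2|h2]; [|lra].
    exfalso.
    pose proof (Hfix w hw (or_intror h2)) as hf.
    destruct (lim_above _ _ _ Hd (proj2 ht)) as [m hm].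
    assert (ew := upow_fix U e x w HU hx hw hf m).
    rewrite Hcom in ew by auto.
    assert (ge : U t (upow U e x m) <= e).
    { assert (Hk := Hinv m). rewrite (Hcom (upow U e x m)) in Hk by auto. assert (U t (upow U e x m) <= U (upow U e y m) (upow U e x m)) by (apply Hmon; auto). lra. }
    assert (U s (U t (upow U e x m)) <= U s e).
    { apply (mon2 U e HU); auto. }
    rewrite (Hcom s e), Hid in H by auto.
    unfold w in *. rewrite <- Has in ew by auto. lra.
  - intros s t hs hsa ht hta.
    set (w := U s t).
    assert (hw : inI w) by (apply Hcl; auto).
    assert (hf : U x w = w).
    { unfold w. rewrite Has by auto. rewrite (Hfix s hs hsa). reflexivity. }
    destruct (Rle_lt_dec w a) as [h1|h1]; [left; exact h1|].
    destruct (Rle_lt_dec d w) as [h2|h2]; [right; exact h2|].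
    exfalso.
    destruct (Rlt_le_dec w e) as [h3|h3].
    + assert (forall n, w <= upow U e x n).
      { induction n. simpl; lra. simpl. rewrite <- hf. apply (mon2 U e HU); auto. }
      assert (w <= a) by (apply (lim_ge_ev (upow U e x) _ _ 0); auto). lra.
    + pose proof (y_fix U e x y w HU hx hy hw hxy hf) as hfy.
      assert (forall n, upow U e y n <= w).
      { induction n. simpl; lra. simpl. rewrite <- hfy. apply (mon2 U e HU); auto. }
      assert (d <= w) by (apply (lim_le_ev (upow U e y) _ _ 0); auto). lra.
Qed.
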